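(* Let $\rho\in\mathbb P^N$ and let $i,j\in N$ with $i\neq j$. (a) Let $\rho^{-ij}=\rho_{g_N-ij}$. Then for every network $g\in\mathbb G^N$: $\rho^{-ij}(g)=\rho(g)+\rho(g+ij)$ if $ij\notin g$, and $\rho^{-ij}(g)=0$ if $ij\in g$. Furthermore $g(\rho^{-ij})=g(\rho)-ij$ and $\mathbb G(\rho^{-ij})=\{g\in\mathbb G^N: ij\notin g \text{ and } \mathbb G(\rho)\cap\{g,g+ij\}\neq\varnothing\}$. (b) Let $\rho^{-i}=\rho_{g_{N-i}}$ where $g_{N-i}=g_N\setminus L_i(g_N)$. Then for every network $g\subseteq g_{N-i}$, $\rho^{-i}(g)=\rho(g)+\sum_{\varnothing\neq h\subseteq L_i(g(\rho))}\rho(g\cup h)$, and for every $g\not\subseteq g_{N-i}$, $\rho^{-i}(g)=0$. Furthermore $g(\rho^{-i})=g(\rho)\setminus L_i(g_N)$ and $\mathbb G(\rho^{-i})=\{g\in\mathbb G^N: g\cap L_i(g_N)=\varnothing \text{ and } \mathbb G(\rho)\cap\{g\cup h: h\subseteq L_i(g_N)\}\neq\varnothing\}$.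
   Context: $N=\{1,\dots,n\}$ is a finite player set. A link is an unordered pair $ij=\{i,j\}$ of distinct players; $g_N$ is the set of all links; a network is any $g\subseteq g_N$; $\mathbb G^N$ is the set of all networks. For a network $g$, $L_i(g)=\{ij\in g\}$ is the set of links of player $i$ in $g$; $g+ij=g\cup\{ij\}$ and $g-ij=g\setminus\{ij\}$. A network formation probability distribution is a map $\rho\colon\mathbb G^N\to[0,1]$ with $\sum_{g\in\mathbb G^N}\rho(g)=1$; $\mathbb P^N$ is the set of these. $\mathbb G(\rho)=\{g:\rho(g)>0\}$ is the set of formable networks and the extent is $g(\rho)=\bigcup_{g\in\mathbb G(\rho)}g$. For a network $g$, the restriction of $\rho$ to $g$ is $\rho_g\in\mathbb P^N$ with $\rho_g(h)=\sum_{h'\subseteq g_N\setminus g}\rho(h\cup h')$ if $h\subseteq g$ and $\rho_g(h)=0$ otherwise. *)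

(* Defs.v *)
From HB Require Import structures.
From mathcomp Require Import all_boot all_order all_algebra.
Set Implicit Arguments. Unset Strict Implicit. Unset Printing Implicit Defensive.
Import Order.TTheory GRing.Theory Num.Theory.
Local Open Scope ring_scope.

(* Players N = {1,...,n} are represented by 'I_n. *)
Definition link (n : nat) := {A : {set 'I_n} | #|A| == 2%N}.

Lemma link2P (n : nat) (i j : 'I_n) : i != j -> #|[set i; j]| == 2%N.
Proof. by move=> hij; rewrite cards2 hij. Qed.

Definition mklink (n : nat) (i j : 'I_n) (hij : i != j) : link n :=
  exist _ [set i; j] (link2P hij).

Definition network (n : nat) := {set link n}.

Definition gN (n : nat) : network n := [set: link n].

Definition Lnk (n : nat) (i : 'I_n) (g : network n) : network n :=
  [set l in g | i \in val l].

Definition is_nfpd (R : realFieldType) (n : nat) (rho : network n -> R) : Prop :=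
  (forall g, 0 <= rho g <= 1) /\ \sum_(g : network n) rho g = 1.

Definition formable (R : realFieldType) (n : nat) (rho : network n -> R)
  : {set network n} := [set g | 0 < rho g].

Definition extent (R : realFieldType) (n : nat) (rho : network n -> R)
  : network n := \bigcup_(g in formable rho) g.

Definition restr (R : realFieldType) (n : nat) (rho : network n -> R)
  (g : network n) : network n -> R :=
  fun h => if h \subset g
           then \sum_(h' : network n | h' \subset gN n :\: g) rho (h :|: h')
           else 0.

(* Main.v *)
Require Import Defs.
From HB Require Import structures.
From mathcomp Require Import all_boot all_order all_algebra.
Import Order.TTheory GRing.Theory Num.Theory.
Local Open Scope ring_scope.

Section Aux.
Variables (R : realFieldType) (n : nat) (rho : network n -> R).
Hypothesis rho_ge0 : forall g, 0 <= rho g.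

Lemma restr_sub (g h : network n) : h \subset g ->
  restr rho g h = \sum_(h' in powerset (gN n :\: g)) rho (h :|: h').
Proof. by rewrite /restr => ->; apply: eq_bigl => h'; rewrite powersetE. Qed.

Lemma restr_nsub (g h : network n) : ~~ (h \subset g) -> restr rho g h = 0.
Proof. by rewrite /restr => /negbTE ->. Qed.

Lemma pos_sub (f : network n) : 0 < rho f -> f \subset extent rho.
Proof. by move=> H; apply: (bigcup_sup f); rewrite inE. Qed.

Lemma formable_restr (g : network n) : formable (restr rho g) =
  [set h : network n | (h \subset g) && [exists h' : network n, (h' \subset gN n :\: g) && (0 < rho (h :|: h'))]].
Proof.
apply/setP=> h; rewrite !inE.
case hs: (h \subset g) => /=; last by rewrite restr_nsub ?hs // ltxx.
rewrite restr_sub // lt_def sumr_ge0 ?andbT; last by move=> *; apply: rho_ge0.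
rewrite psumr_neq0; last by move=> *; apply: rho_ge0.
apply/hasP/existsP => [[h' _ /andP[H1 H2]]|[h' /andP[H1 H2]]].
  by exists h'; rewrite -powersetE H1.
by exists h'; rewrite ?mem_index_enum // powersetE H1.
Qed.

Lemma extent_restr (g : network n) : extent (restr rho g) = extent rho :&: g.
Proof.
apply/setP=> l; rewrite inE; apply/bigcupP/andP.
  move=> [h]; rewrite formable_restr inE => /andP[hs /existsP[h' /andP[_ Hp]]] lh.
  split; last by apply: (subsetP hs).
  by apply: (subsetP (pos_sub _ Hp) l); rewrite inE lh.
move=> [/bigcupP[f]]; rewrite inE => Hf lf lg.
exists (f :&: g); last by rewrite inE lf lg.
rewrite formable_restr inE subsetIr /=; apply/existsP; exists (f :\: g).
by rewrite setSD ?subsetT //= setID.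
Qed.

End Aux.

Theorem proposition1 (R : realFieldType) (n : nat) (rho : network n -> R)
  (i j : 'I_n) (hij : i != j) :
  is_nfpd rho ->
  (* (a) *)
  (let ij := mklink hij in
   let rho_ij := restr rho (gN n :\ ij) in
   (forall g : network n, ij \notin g -> rho_ij g = rho g + rho (ij |: g)) /\
   (forall g : network n, ij \in g -> rho_ij g = 0) /\
   extent rho_ij = extent rho :\ ij /\
   formable rho_ij =
     [set g : network n | (ij \notin g) &&
                          (formable rho :&: [set g; ij |: g] != set0)]) /\
  (* (b) *)
  (let gNi := gN n :\: Lnk i (gN n) in
   let rho_i := restr rho gNi in
   (forall g : network n, g \subset gNi ->
      rho_i g = rho g + \sum_(h in powerset (Lnk i (extent rho)) | h != set0)
                          rho (g :|: h)) /\
   (forall g : network n, ~~ (g \subset gNi) -> rho_i g = 0) /\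
   extent rho_i = extent rho :\: Lnk i (gN n) /\
   formable rho_i =
     [set g : network n | (g :&: Lnk i (gN n) == set0) &&
        (formable rho :&: [set g :|: h | h in powerset (Lnk i (gN n))] != set0)]).
Proof.
move=> [Hr _].
have ge0 : forall g, 0 <= rho g by move=> g; case/andP: (Hr g).
set ij := mklink hij.
have compl : gN n :\: (gN n :\ ij) = [set ij].
  by apply/setP=> l; rewrite !inE andbT; case: (l == ij).
have subij : forall g : network n, (g \subset gN n :\ ij) = (ij \notin g).
  move=> g; apply/subsetP/idP => [H|H l lg]; first by apply/negP => /H; rewrite !inE eqxx.
  by rewrite !inE andbT; apply/eqP => E; rewrite -E lg in H.
split.
  split.
    move=> g gij; rewrite restr_sub ?subij // compl powerset1.
    rewrite big_setU1 /= ?big_set1 ?setU0 1?setUC //.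
    by rewrite inE eq_sym; apply/eqP => /setP /(_ ij); rewrite !inE eqxx.
  split.
    by move=> g gij; rewrite restr_nsub ?subij ?gij.
  split.
    by rewrite extent_restr //; apply/setP=> l; rewrite /gN !inE andbT andbC.
  apply/setP=> g; rewrite formable_restr // !inE subij.
  case gij: (ij \in g) => //=.
  apply/existsP/set0Pn => [[h' /andP[]]|[f]].
    rewrite compl subset1 => /orP[/eqP->|/eqP->] Hp.
      by exists (ij |: g); rewrite !inE -[ij |: g]setUC Hp eqxx orbT.
    by exists g; rewrite !inE -[g in rho g]setU0 Hp eqxx.
  rewrite !inE => /andP[Hp /orP[/eqP E|/eqP E]]; subst f.
    by exists set0; rewrite setU0 Hp sub0set.
  by exists [set ij]; rewrite compl subxx setUC Hp.
set Li := Lnk i (gN n).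
have complb : gN n :\: (gN n :\: Li) = Li.
  by apply/setP=> l; rewrite !inE; case: (i \in val l).
have subi : forall g : network n, (g \subset gN n :\: Li) = (g :&: Li == set0).
  by move=> g; rewrite subsetD subsetT setI_eq0.
split.
  move=> g gs; rewrite restr_sub // complb.
  rewrite (big_setID (powerset (Lnk i (extent rho)))) /=.
  rewrite [X in _ + X]big1 ?addr0; last first.
    move=> h; rewrite !inE => /andP[hn hL].
    apply/eqP; rewrite eq_le ge0 andbT leNgt; apply/negP => Hp.
    move/negP: hn; apply; apply/subsetP => l lh.
    have := subsetP hL _ lh; rewrite /Li /Lnk !inE => /andP[_ il].
    rewrite il andbT; apply: (subsetP (pos_sub _ _ _ _ Hp) l); by rewrite inE lh orbT.
  rewrite (_ : powerset Li :&: _ = powerset (Lnk i (extent rho))); last first.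
    apply/setIidPr/subsetP => h; rewrite !powersetE => H.
    apply: subset_trans H _; apply/subsetP => l; rewrite /Li /Lnk !inE.
    by case/andP => _ ->.
  by rewrite (bigD1 set0) ?powersetE ?sub0set //= setU0.
split.
  by move=> g gs; rewrite restr_nsub.
split.
  by rewrite extent_restr //; apply/setP=> l; rewrite /gN !inE andbT andbC.
apply/setP=> g; rewrite formable_restr // !inE subi.
case gij: (g :&: Li == set0) => //=.
apply/existsP/set0Pn => [[h' /andP[]]|[f]].
  rewrite complb => hs Hp; exists (g :|: h'); rewrite !inE Hp /=.
  by apply/imsetP; exists h'; rewrite ?powersetE.
rewrite !inE => /andP[Hp /imsetP[h' hin E]]; subst f.
by exists h'; rewrite complb -powersetE hin.
Qed.
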